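(* Let $G$ be a periodic group and let $x\in G$ be such that $[G,x]$ is a Chernikov group. Let $R$ be the radicable part of $[G,x]$ and assume that $[R,x]=\{1\}$. Then $R=\{1\}$.
   Context: For a subgroup $H$ and element $x$ of a group $G$, $[H,x]$ is the subgroup generated by all commutators $[a,x]=a^{-1}x^{-1}ax$ with $a\in H$. A group is radicable if every equation $y^s=a$ ($s$ a positive integer) has a solution in it. A Chernikov group $K$ has a radicable abelian normal subgroup $R$ (its radicable part, or finite residual) which is a direct product of finitely many Prüfer groups $C_{p^\infty}$ and with $K/R$ finite. *)

(* Defs.v *)
From Stdlib Require Import Arith.

Set Implicit Arguments.

Record Group := {
  carrier :> Type;
  gmul : carrier -> carrier -> carrier;
  ginv : carrier -> carrier;
  gone : carrier;
  gmulA : forall a b c, gmul a (gmul b c) = gmul (gmul a b) c;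
  gmul1l : forall a, gmul gone a = a;
  gmul1r : forall a, gmul a gone = a;
  gmulVl : forall a, gmul (ginv a) a = gone;
  gmulVr : forall a, gmul a (ginv a) = gone
}.

Section GroupDefs.
Variable G : Group.

Fixpoint gpow (g : G) (n : nat) : G :=
  match n with
  | 0 => gone G
  | S m => gmul G (gpow g m) g
  end.

Definition comm (a x : G) : G :=
  gmul G (gmul G (gmul G (ginv G a) (ginv G x)) a) x.

Definition subgroup (H : G -> Prop) : Prop :=
  H (gone G) /\ (forall a b, H a -> H b -> H (gmul G a b)) /\
  (forall a, H a -> H (ginv G a)).

Inductive gen (S : G -> Prop) : G -> Prop :=
  | gen_in : forall s, S s -> gen S s
  | gen_one : gen S (gone G)
  | gen_mul : forall a b, gen S a -> gen S b -> gen S (gmul G a b)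
  | gen_inv : forall a, gen S a -> gen S (ginv G a).

Definition commx (H : G -> Prop) (x : G) : G -> Prop :=
  gen (fun c => exists a, H a /\ c = comm a x).

Definition whole : G -> Prop := fun _ => True.

Definition trivial_sub (H : G -> Prop) : Prop := forall g, H g <-> g = gone G.

Definition periodic : Prop := forall g : G, exists n, 0 < n /\ gpow g n = gone G.

Definition is_prime (p : nat) : Prop :=
  1 < p /\ forall d, Nat.divide d p -> d = 1 \/ d = p.

(* P is a Pruefer p-group C_{p^oo}: the union of the chain of cyclic groups
   <c_1> < <c_2> < ... with c_1 <> 1, c_1^p = 1, c_(n+1)^p = c_n. *)
Definition pruefer (p : nat) (P : G -> Prop) : Prop :=
  is_prime p /\
  exists c : nat -> G,
    c 0 = gone G /\ c 1 <> gone G /\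
    (forall n, gpow (c (S n)) p = c n) /\
    (forall g, P g <-> exists n k, g = gpow (c n) k).

Fixpoint gprod (f : nat -> G) (n : nat) : G :=
  match n with
  | 0 => gone G
  | S m => gmul G (gprod f m) (f m)
  end.

Definition direct_prod_pruefer (R : G -> Prop) : Prop :=
  exists (n : nat) (p : nat -> nat) (P : nat -> G -> Prop),
    (forall i, i < n -> subgroup (P i) /\ pruefer (p i) (P i)) /\
    (forall i j a b, i < n -> j < n -> P i a -> P j b ->
        gmul G a b = gmul G b a) /\
    (forall g, R g <-> exists f : nat -> G,
        (forall i, i < n -> P i (f i)) /\ g = gprod f n) /\
    (forall f f' : nat -> G,
        (forall i, i < n -> P i (f i)) -> (forall i, i < n -> P i (f' i)) ->
        gprod f n = gprod f' n -> forall i, i < n -> f i = f' i).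

Definition normal_in (R K : G -> Prop) : Prop :=
  forall r k, R r -> K k -> R (gmul G (gmul G (ginv G k) r) k).

Definition abelian_sub (R : G -> Prop) : Prop :=
  forall a b, R a -> R b -> gmul G a b = gmul G b a.

Definition radicable (R : G -> Prop) : Prop :=
  forall a s, R a -> 0 < s -> exists y, R y /\ gpow y s = a.

Definition finite_index (R K : G -> Prop) : Prop :=
  exists (m : nat) (k : nat -> G),
    (forall j, j < m -> K (k j)) /\
    (forall g, K g -> exists j r, j < m /\ R r /\ g = gmul G (k j) r).

(* R is the radicable part of the Chernikov group K: a radicable abelian
   normal subgroup of K, direct product of finitely many Pruefer groups,
   with K/R finite.  (Such R is unique when it exists.) *)
Definition chernikov_radicable_part (K R : G -> Prop) : Prop :=
  subgroup R /\ (forall g, R g -> K g) /\ normal_in R K /\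
  abelian_sub R /\ radicable R /\ direct_prod_pruefer R /\ finite_index R K.

Definition chernikov (K : G -> Prop) : Prop :=
  subgroup K /\ exists R, chernikov_radicable_part K R.

End GroupDefs.

(* Main.v *)
Require Import Defs.
From Stdlib Require Import List Permutation Lia Arith ClassicalEpsilon Classical.

Lemma php (m : nat) (f : nat -> nat) : (forall i, i <= m -> f i < m) ->
  exists i j, i < j <= m /\ f i = f j.
Proof. intro H. apply NNPP. intro Hn.
  assert (NoDup (map f (seq 0 (S m)))).
  { apply NoDup_map_NoDup_ForallPairs. 2: apply seq_NoDup.
    intros a b Ha Hb Heq. apply in_seq in Ha, Hb.
    destruct (lt_eq_lt_dec a b) as [[h|h]|h]; auto; exfalso; apply Hn.
    exists a, b; split; auto; lia. exists b, a; split; auto; lia. }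
  apply NoDup_incl_length with (l' := seq 0 m) in H0.
  rewrite length_map, !length_seq in H0. lia.
  intros a Ha. apply in_map_iff in Ha. destruct Ha as [i [<- Hi]].
  apply in_seq in Hi. apply in_seq. specialize (H i). lia.
Qed.

Section GT.
Variable G : Group.
Local Infix "**" := (gmul G) (at level 40, left associativity).
Local Notation inv := (ginv G).
Local Notation one := (gone G).

Lemma mulA' (a b c : G) : a ** b ** c = a ** (b ** c).
Proof. symmetry; apply gmulA. Qed.
Lemma mul1l (a : G) : one ** a = a. Proof. apply gmul1l. Qed.
Lemma mul1r (a : G) : a ** one = a. Proof. apply gmul1r. Qed.
Lemma Vmul (a : G) : inv a ** a = one. Proof. apply gmulVl. Qed.
Lemma mulV (a : G) : a ** inv a = one. Proof. apply gmulVr. Qed.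
Lemma mulKl (a b : G) : inv a ** (a ** b) = b.
Proof. rewrite gmulA, Vmul, mul1l; reflexivity. Qed.
Lemma mulKr (a b : G) : a ** (inv a ** b) = b.
Proof. rewrite gmulA, mulV, mul1l; reflexivity. Qed.
Lemma inv_uniq (a b : G) : a ** b = one -> inv a = b.
Proof. intro H. rewrite <- (mul1r (inv a)), <- H, mulKl. reflexivity. Qed.
Lemma invM (a b : G) : inv (a ** b) = inv b ** inv a.
Proof. apply inv_uniq. rewrite !mulA', mulKr, mulV. reflexivity. Qed.
Lemma invK (a : G) : inv (inv a) = a.
Proof. apply inv_uniq. apply Vmul. Qed.
Lemma inv1 : inv one = one.
Proof. apply inv_uniq. apply mul1l. Qed.

Ltac gsimpl := repeat progress (rewrite ?invM, ?invK, ?inv1, ?mulA', ?mul1l, ?mul1r,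
   ?mulV, ?Vmul, ?mulKl, ?mulKr).

Lemma mul_cancel_l (a b c : G) : a ** b = a ** c -> b = c.
Proof. intro H. rewrite <- (mulKl a b), H. gsimpl. reflexivity. Qed.
Lemma mul_cancel_r (a b c : G) : b ** a = c ** a -> b = c.
Proof. intro H. rewrite <- (mul1r b), <- (mulV a), <- mulA', H. gsimpl. reflexivity. Qed.

Lemma gpow_add (a : G) i j : gpow G a (i + j) = gpow G a i ** gpow G a j.
Proof. induction j; simpl. rewrite Nat.add_0_r, mul1r; auto.
  rewrite Nat.add_succ_r; simpl. rewrite IHj. gsimpl. reflexivity. Qed.
Lemma gpow_mul (a : G) i j : gpow G a (i * j) = gpow G (gpow G a i) j.
Proof. induction j; simpl. rewrite Nat.mul_0_r; auto.
  rewrite Nat.mul_succ_r, gpow_add, IHj. reflexivity. Qed.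
Lemma gpow_one n : gpow G one n = one.
Proof. induction n; simpl; auto. rewrite IHn; apply mul1l. Qed.
Lemma gpow_comm (a b : G) n : a ** b = b ** a -> gpow G a n ** b = b ** gpow G a n.
Proof. intro H; induction n; simpl. rewrite mul1l, mul1r; auto.
  rewrite mulA', H, <- !mulA', IHn. reflexivity. Qed.
Lemma gpow_self (a : G) n : gpow G a n ** a = a ** gpow G a n.
Proof. apply gpow_comm; reflexivity. Qed.
Lemma gpow_mulc (a b : G) n : a ** b = b ** a ->
  gpow G (a ** b) n = gpow G a n ** gpow G b n.
Proof. intro H; induction n; simpl. rewrite mul1l; auto.
  rewrite IHn. gsimpl. f_equal. rewrite <- !mulA'. f_equal.
  first [apply gpow_comm | symmetry; apply gpow_comm]; symmetry; auto. Qed.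
Lemma gpow_inv (a : G) n : gpow G (inv a) n = inv (gpow G a n).
Proof. induction n; simpl. rewrite inv1; auto.
  rewrite IHn, <- invM. f_equal. symmetry. apply gpow_self. Qed.
Lemma gpow_conj (g a : G) n : gpow G (inv g ** a ** g) n = inv g ** gpow G a n ** g.
Proof. induction n; simpl. gsimpl; auto. rewrite IHn. gsimpl. reflexivity. Qed.

Lemma comm_eq (a b : G) : comm G a b = one -> a ** b = b ** a.
Proof. unfold comm. intro H. apply mul_cancel_l with (a := inv a ** inv b).
  gsimpl. rewrite <- H. gsimpl. reflexivity. Qed.

Lemma gprod_ext f f' q : (forall i, i < q -> f i = f' i) -> gprod G f q = gprod G f' q.
Proof. induction q; simpl; intros; auto. rewrite IHq, H; auto. Qed.
Lemma gprod_const z q : gprod G (fun _ => z) q = gpow G z q.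
Proof. induction q; simpl; auto. rewrite IHq; auto. Qed.

Section Ab.
Variable Z : G -> Prop.
Hypothesis Zsub : subgroup G Z.
Hypothesis Zab : forall a b, Z a -> Z b -> a ** b = b ** a.

Lemma gprod_Z f q : (forall i, i < q -> Z (f i)) -> Z (gprod G f q).
Proof. destruct Zsub as [Z1 [ZM ZV]]. induction q; simpl; intros; auto. apply ZM; auto. Qed.

Lemma gprod_mul f f' q : (forall i, i < q -> Z (f i)) -> (forall i, i < q -> Z (f' i)) ->
  gprod G (fun i => f i ** f' i) q = gprod G f q ** gprod G f' q.
Proof. induction q; simpl; intros. rewrite mul1l; auto.
  rewrite IHq; auto. gsimpl. f_equal. rewrite <- !mulA'. f_equal.
  apply Zab. apply gprod_Z; auto. auto. Qed.

Fixpoint lprod (l : list G) : G := match l with nil => one | a :: l => a ** lprod l end.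
Lemma lprod_app l1 l2 : lprod (l1 ++ l2) = lprod l1 ** lprod l2.
Proof. induction l1; simpl. rewrite mul1l; auto. rewrite IHl1; gsimpl; auto. Qed.
Lemma gprod_lprod f q : gprod G f q = lprod (map f (seq 0 q)).
Proof. induction q. reflexivity. cbn [gprod]. rewrite seq_S, map_app, lprod_app, IHq; simpl.
  rewrite mul1r; auto. Qed.
Lemma lprod_perm l l' : Permutation l l' -> Forall Z l -> lprod l = lprod l'.
Proof. induction 1; simpl; intros HF; auto.
  - inversion HF; subst. rewrite IHPermutation; auto.
  - inversion HF; subst. inversion H2; subst. rewrite <- !mulA', (Zab y x); auto.
  - rewrite IHPermutation1; auto. apply IHPermutation2.
    rewrite Forall_forall in *. intros a Ha. apply HF.
    apply Permutation_in with l'; auto. apply Permutation_sym; auto. Qed.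

Lemma gprod_perm f (s : nat -> nat) q :
  (forall i, i < q -> Z (f i)) -> (forall i, i < q -> s i < q) ->
  (forall i j, i < q -> j < q -> s i = s j -> i = j) ->
  gprod G (fun i => f (s i)) q = gprod G f q.
Proof. intros HZ Hs Hinj. rewrite !gprod_lprod.
  replace (map (fun i => f (s i)) (seq 0 q)) with (map f (map s (seq 0 q))).
  2:{ rewrite map_map; auto. }
  apply lprod_perm. apply Permutation_map. apply NoDup_Permutation_bis.
  - apply NoDup_map_NoDup_ForallPairs. intros a b Ha Hb. apply in_seq in Ha, Hb.
    apply Hinj; lia. apply seq_NoDup.
  - rewrite !length_map; lia.
  - intros a Ha. apply in_map_iff in Ha. destruct Ha as [i [<- Hi]].
    apply in_seq in Hi. apply in_seq. specialize (Hs i). lia.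
  - apply Forall_forall. intros a Ha. rewrite map_map in Ha.
    apply in_map_iff in Ha. destruct Ha as [i [<- Hi]].
    apply in_seq in Hi. apply HZ. apply Hs. lia.
Qed.
End Ab.
Lemma comm_inv (a b : G) : a ** b = b ** a -> a ** inv b = inv b ** a.
Proof. intro E. apply mul_cancel_l with (a := b). rewrite <- mulA', <- E. gsimpl. reflexivity. Qed.

Section Transfer.
Variables H Z : G -> Prop.
Hypothesis HM : forall a b, H a -> H b -> H (a ** b).
Hypothesis H1 : H one.
Hypothesis Zsub : subgroup G Z.
Hypothesis ZH : forall z, Z z -> H z.
Hypothesis Zc : forall z h, Z z -> H h -> z ** h = h ** z.

Lemma Z1 : Z one. Proof. apply Zsub. Qed.
Lemma ZM a b : Z a -> Z b -> Z (a ** b). Proof. apply Zsub. Qed.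
Lemma ZV a : Z a -> Z (inv a). Proof. apply Zsub. Qed.
Lemma Zab a b : Z a -> Z b -> a ** b = b ** a. Proof. intros; apply Zc; auto. Qed.
Lemma Zsym a b : Z (inv a ** b) -> Z (inv b ** a).
Proof. intro E. apply ZV in E. rewrite invM, invK in E. exact E. Qed.
Lemma Ztrans a b c : Z (inv a ** b) -> Z (inv b ** c) -> Z (inv a ** c).
Proof. intros E F. generalize (ZM _ _ E F). gsimpl. auto. Qed.
Lemma Zconj h X : H h -> Z (inv h ** (X ** h)) -> Z X.
Proof. intros Hh E. replace X with (h ** (inv h ** (X ** h)) ** inv h).
  rewrite <- (Zc _ h); auto. gsimpl. auto. gsimpl. auto. Qed.

Lemma extract (l : list G) : exists l', incl l' l /\
  (forall a, In a l -> exists t, In t l' /\ Z (inv t ** a)) /\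
  (forall i j, i < j < length l' -> ~ Z (inv (nth i l' one) ** nth j l' one)).
Proof.
  induction l as [|a l0 IH].
  - exists nil. split. intros x Hx; inversion Hx. split. intros x Hx; inversion Hx.
    simpl; intros; lia.
  - destruct IH as [l0' [Hi [Hc Hd]]].
    destruct (classic (exists t, In t l0' /\ Z (inv t ** a))) as [Ex|NEx].
    + exists l0'. split. intros x Hx; right; auto. split; auto.
      intros b [Eb|Hb]; [subst b|]; auto.
    + exists (a :: l0'). split. intros x [<-|Hx]; [left; auto|right; auto].
      split.
      * intros b [Eb|Hb]. subst b. exists a; split; [left; auto|]. gsimpl; apply Z1.
        destruct (Hc b Hb) as [t [Ht Zt]]. exists t; split; [right|]; auto.
      * intros i j Hij. destruct i as [|i]; destruct j as [|j]; try lia; simpl in *.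
        -- intro Zz. apply NEx. exists (nth j l0' one). split.
           apply nth_In; lia. apply Zsym; auto.
        -- apply Hd; lia.
Qed.

Lemma transfer (l : list G) : Forall H l ->
  (forall h, H h -> exists t, In t l /\ Z (inv t ** h)) ->
  exists (V : G -> G) (q : nat), 0 < q /\ (forall h, H h -> Z (V h)) /\
    (forall h h', H h -> H h' -> V (h ** h') = V h ** V h') /\
    (forall z, Z z -> V z = gpow G z q).
Proof.
  intros HF Hcl. destruct (extract l) as [l' [Hincl [Hcov Hdis]]].
  set (q := length l'). set (t := fun i => nth i l' one).
  assert (tH : forall i, i < q -> H (t i)).
  { intros i Hi. rewrite Forall_forall in HF. apply HF, Hincl, nth_In; auto. }
  assert (cov : forall y, H y -> exists j, j < q /\ Z (inv (t j) ** y)).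
  { intros y Hy. destruct (Hcl y Hy) as [a [Ha Za]]. destruct (Hcov a Ha) as [t0 [Ht0 Zt0]].
    destruct (In_nth _ _ one Ht0) as [j [Hj Ej]]. exists j. split; auto.
    unfold t; rewrite Ej. eapply Ztrans; eauto. }
  assert (dist : forall i j, i < q -> j < q -> Z (inv (t i) ** t j) -> i = j).
  { intros i j Hi Hj E. destruct (lt_eq_lt_dec i j) as [[h|h]|h]; auto; exfalso.
    apply (Hdis i j); auto. apply (Hdis j i); auto. apply Zsym; auto. }
  assert (uniq : forall j j' y, j < q -> j' < q -> Z (inv (t j) ** y) -> Z (inv (t j') ** y) -> j = j').
  { intros j j' y Hj Hj' E E'. apply dist; auto. eapply Ztrans. exact E. apply Zsym; auto. }
  set (sig := fun h i => epsilon (inhabits 0) (fun j => j < q /\ Z (inv (t j) ** (t i ** h)))).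
  assert (sig_spec : forall h i, H h -> i < q -> sig h i < q /\ Z (inv (t (sig h i)) ** (t i ** h))).
  { intros h i Hh Hi. unfold sig. apply epsilon_spec. apply cov. apply HM; auto. }
  set (rho := fun h i => inv (t (sig h i)) ** (t i ** h)).
  exists (fun h => gprod G (rho h) q), q.
  split. { destruct (cov one H1) as [j [Hj _]]. lia. }
  split. { intros h Hh. apply gprod_Z; auto. intros i Hi. apply sig_spec; auto. }
  split.
  - intros h h' Hh Hh'.
    assert (key : forall i, i < q -> rho (h ** h') i = rho h i ** rho h' (sig h i)).
    { intros i Hi. destruct (sig_spec h i Hh Hi) as [Hs Zs].
      destruct (sig_spec h' (sig h i) Hh' Hs) as [Hs' Zs'].
      set (j := sig h i) in *. set (j' := sig h' j) in *.
      assert (E : inv (t j') ** (t i ** (h ** h')) = rho h i ** rho h' j).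
      { assert (E1 : t i ** h = t j ** rho h i). { unfold rho; fold j. gsimpl. auto. }
        rewrite (gmulA G (t i) h h'), E1. rewrite <- (Zc _ (t j)); auto.
        rewrite !mulA'. rewrite (gmulA G (inv (t j'))).
        rewrite <- comm_inv; [rewrite mulA'; reflexivity|]. apply Zc; auto. }
      assert (Esig : sig (h ** h') i = j').
      { destruct (sig_spec (h ** h') i (HM _ _ Hh Hh') Hi) as [A B].
        apply (uniq _ _ _ A Hs' B). rewrite E. apply ZM; auto. }
      unfold rho at 1. rewrite Esig. exact E. }
    rewrite (gprod_ext _ _ _ key).
    rewrite gprod_mul with (Z := Z); auto.
    f_equal. apply gprod_perm with (Z := Z); auto.
    + intros i Hi. apply sig_spec; auto.
    + intros i Hi. apply sig_spec; auto.
    + intros i i' Hi Hi' Es. apply dist; auto.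
      apply Zconj with h; auto.
      destruct (sig_spec h i Hh Hi) as [_ Z1'].
      destruct (sig_spec h i' Hh Hi') as [_ Z2'].
      rewrite Es in Z1'. generalize (ZM _ _ (ZV _ Z1') Z2'). gsimpl. auto.
    + intros i Hi. apply sig_spec; auto.
    + intros i Hi. apply sig_spec; auto. apply sig_spec; auto.
  - intros z Zz. rewrite <- gprod_const. apply gprod_ext. intros i Hi.
    assert (Es : sig z i = i).
    { destruct (sig_spec z i (ZH _ Zz) Hi) as [A B].
      apply (uniq _ _ _ A Hi B). gsimpl; auto. }
    unfold rho. rewrite Es. gsimpl. auto.
Qed.
End Transfer.
Lemma divide_fact d m : 1 <= d <= m -> exists c, fact m = d * c.
Proof. induction m; intros Hd. lia.
  destruct (Nat.eq_dec d (S m)) as [E|E].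
  - exists (fact m). subst; reflexivity.
  - destruct IHm as [c Hc]. lia. exists (S m * c). simpl fact.
    change (fact (S m)) with (S m * fact m). rewrite Hc. ring.
Qed.

Lemma main_lemma (x : G) (R : G -> Prop) :
  periodic G ->
  chernikov_radicable_part G (commx G (whole G) x) R ->
  trivial_sub G (commx G R x) ->
  forall r, R r -> r = one.
Proof.
  intros Hper HR Htriv.
  set (K := commx G (whole G) x) in *.
  destruct HR as [Rsub [RK [_ [Rab [Rrad [_ [m [kk [Hkk Hkcov]]]]]]]]].
  destruct Rsub as [R1 [RM RV]].
  assert (Rsub : subgroup G R) by (split; auto).
  assert (xc : forall r, R r -> r ** x = x ** r).
  { intros r Hr. apply comm_eq. apply (proj1 (Htriv (comm G r x))).
    apply gen_in. exists r; auto. }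
  assert (K1 : K one) by apply gen_one.
  assert (KM : forall a b, K a -> K b -> K (a ** b)) by (intros; apply gen_mul; auto).
  assert (KV : forall a, K a -> K (inv a)) by (intros; apply gen_inv; auto).
  assert (Kc : forall a, K (comm G a x)) by (intros; apply gen_in; exists a; split; [exact I|auto]).
  assert (Knorm : forall g k, K k -> K (inv g ** k ** g)).
  { intros g k Hk. induction Hk as [s [a [_ ->]]| | a b _ IHa _ IHb | a _ IHa].
    - replace (inv g ** comm G a x ** g) with (comm G (a ** g) x ** inv (comm G g x)).
      apply KM; auto. unfold comm. gsimpl. reflexivity.
    - replace (inv g ** one ** g) with one by (gsimpl; reflexivity). auto.
    - replace (inv g ** (a ** b) ** g) with ((inv g ** a ** g) ** (inv g ** b ** g))
        by (gsimpl; reflexivity). auto.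
    - replace (inv g ** inv a ** g) with (inv (inv g ** a ** g)) by (gsimpl; reflexivity).
      auto. }
  assert (Kpow : forall k n, K k -> K (gpow G k n)).
  { intros k n Hk; induction n; simpl; auto. }
  assert (Rpow : forall k n, R k -> R (gpow G k n)).
  { intros k n Hk; induction n; simpl; auto. }
  assert (fin : forall k, K k -> R (gpow G k (fact m))).
  { intros k Hk.
    set (f := fun i => epsilon (inhabits 0)
         (fun j => j < m /\ exists r, R r /\ gpow G k i = kk j ** r)).
    assert (fspec : forall i, f i < m /\ exists r, R r /\ gpow G k i = kk (f i) ** r).
    { intro i. unfold f. apply epsilon_spec.
      destruct (Hkcov (gpow G k i) (Kpow _ _ Hk)) as [j [r [Hj [Hr E]]]].
      exists j. split; auto. exists r; auto. }
    destruct (php m f) as [i [i' [Hii Ef]]]. intros i _; apply fspec.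
    destruct (fspec i) as [_ [r [Hr Er]]]. destruct (fspec i') as [_ [r' [Hr' Er']]].
    rewrite <- Ef in Er'.
    assert (Rd : R (gpow G k (i' - i))).
    { replace (gpow G k (i' - i)) with (inv r ** r').
      apply RM; auto.
      assert (E : gpow G k i' = gpow G k i ** gpow G k (i' - i)).
      { rewrite <- gpow_add. f_equal. lia. }
      rewrite Er, Er' in E. apply (mul_cancel_l (kk (f i) ** r)). rewrite <- E.
      gsimpl. reflexivity. }
    destruct (divide_fact (i' - i) m) as [c Hc]. lia.
    rewrite Hc, gpow_mul. auto. }
  assert (Rnorm : forall g r, R r -> R (inv g ** r ** g)).
  { intros g r Hr. destruct (Rrad r (fact m) Hr (lt_O_fact m)) as [y [Hy Ey]].
    rewrite <- Ey, <- gpow_conj. apply fin. apply Knorm. auto. }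
  assert (conjx : forall g r, R r -> (inv g ** inv x ** g) ** r = r ** (inv g ** inv x ** g)).
  { intros g r Hr.
    assert (Hr' : R (g ** r ** inv g)).
    { generalize (Rnorm (inv g) r Hr). rewrite invK. auto. }
    assert (C : (g ** r ** inv g) ** inv x = inv x ** (g ** r ** inv g)).
    { apply comm_inv. apply xc; auto. }
    replace (inv g ** inv x ** g ** r) with (inv g ** (inv x ** (g ** r ** inv g)) ** g)
      by (gsimpl; reflexivity).
    rewrite <- C. gsimpl. reflexivity. }
  assert (Kcent : forall k r, K k -> R r -> k ** r = r ** k).
  { intros k r Hk Hr. induction Hk as [s [a [_ ->]]| | a b _ IHa _ IHb | a _ IHa].
    - unfold comm. rewrite mulA', <- (xc r Hr), <- mulA', (conjx a r Hr).
      gsimpl. reflexivity.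
    - rewrite mul1l, mul1r. reflexivity.
    - rewrite mulA', IHb, <- mulA', IHa, mulA'. reflexivity.
    - symmetry. apply comm_inv. symmetry. auto. }
  destruct (Hper x) as [n [Hn xn]].
  set (L := fun h => exists k e, K k /\ h = k ** gpow G x e).
  assert (xpc : forall r e, R r -> gpow G x e ** r = r ** gpow G x e).
  { intros r e Hr. apply gpow_comm. symmetry. auto. }
  assert (LM : forall a b, L a -> L b -> L (a ** b)).
  { intros a b [k [e [Hk ->]]] [k' [e' [Hk' ->]]].
    exists (k ** (gpow G x e ** k' ** inv (gpow G x e))), (e + e'). split.
    - apply KM; auto. generalize (Knorm (inv (gpow G x e)) k' Hk'). rewrite invK. auto.
    - rewrite gpow_add. gsimpl. reflexivity. }
  assert (L1 : L one). { exists one, 0. split; auto. simpl. rewrite mul1l; auto. }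
  assert (KL : forall k, K k -> L k). { intros k Hk. exists k, 0. simpl. rewrite mul1r; auto. }
  assert (RL : forall r, R r -> L r). { intros; apply KL; auto. }
  assert (Lcent : forall r h, R r -> L h -> r ** h = h ** r).
  { intros r h Hr [k [e [Hk ->]]]. rewrite (gmulA G r k), <- (Kcent k r Hk Hr).
    rewrite !mulA', <- (xpc r e Hr). reflexivity. }
  set (l := flat_map (fun j => map (fun e => kk j ** gpow G x e) (seq 0 n)) (seq 0 m)).
  assert (HF : Forall L l).
  { apply Forall_forall. intros h Hh. unfold l in Hh. apply in_flat_map in Hh.
    destruct Hh as [j [Hj Hh]]. apply in_map_iff in Hh. destruct Hh as [e [<- _]].
    apply in_seq in Hj. exists (kk j), e. split; auto. apply Hkk. lia. }
  assert (Hcl : forall h, L h -> exists t, In t l /\ R (inv t ** h)).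
  { intros h [k [e [Hk ->]]]. destruct (Hkcov k Hk) as [j [r [Hj [Hr ->]]]].
    assert (Hmod : gpow G x e = gpow G x (e mod n)).
    { rewrite (Nat.div_mod_eq e n) at 1. rewrite gpow_add, gpow_mul, xn, gpow_one, mul1l.
      reflexivity. }
    exists (kk j ** gpow G x (e mod n)). split.
    - unfold l. apply in_flat_map. exists j. split. apply in_seq; lia.
      apply in_map_iff. exists (e mod n). split; auto. apply in_seq.
      assert (e mod n < n) by (apply Nat.mod_upper_bound; lia). lia.
    - rewrite Hmod. gsimpl. rewrite <- (xpc r _ Hr), mulKl. auto. }
  destruct (transfer L R LM L1 Rsub RL Lcent l HF Hcl) as [V [q [Hq [VR [VM Vz]]]]].
  assert (Lpow : forall h k, L h -> L (gpow G h k)).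
  { intros h k Hh; induction k; simpl; auto. }
  assert (Vpow : forall h k, L h -> V (gpow G h k) = gpow G (V h) k).
  { intros h k Hh; induction k; simpl. rewrite Vz, gpow_one; auto.
    rewrite VM, IHk; auto. }
  assert (V1 : V one = one). { rewrite Vz, gpow_one; auto. }
  assert (Rcomm : forall a b, R a -> R b -> a ** b = b ** a) by exact Rab.
  assert (VK : forall k, K k -> gpow G (V k) n = one).
  { intros k Hk. induction Hk as [s [a [_ ->]]| | a b Ha IHa Hb IHb | a Ha IHa].
    - set (u := inv a ** inv x ** a).
      assert (Lu : L u).
      { exists (comm G a x), (n - 1). split. apply Kc.
        unfold comm. fold u. rewrite mulA', <- gpow_self.
        change (gpow G x (n - 1) ** x) with (gpow G x (S (n - 1))).
        replace (S (n - 1)) with n by lia. rewrite xn, mul1r. reflexivity. }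
      assert (Lx : L x). { exists one, 1. split; auto. simpl. rewrite !mul1l. auto. }
      change (comm G a x) with (u ** x). rewrite VM; auto.
      rewrite gpow_mulc by (apply Rab; apply VR; auto).
      rewrite <- !Vpow; auto. unfold u. rewrite gpow_conj, gpow_inv, xn. gsimpl.
      rewrite V1, mul1l. reflexivity.
    - rewrite V1, gpow_one. reflexivity.
    - assert (La : L a) by (apply KL; auto). assert (Lb : L b) by (apply KL; auto).
      rewrite VM, gpow_mulc, IHa, IHb, mul1l; auto. all: try (apply Rab; apply VR; auto).
    - assert (La : L a) by (apply KL; auto). assert (La' : L (inv a)) by (apply KL; auto).
      assert (E : inv (V a) = V (inv a)).
      { apply inv_uniq. rewrite <- VM, mulV; auto. }
      rewrite <- E, gpow_inv, IHa, inv1. reflexivity. }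
  intros r Hr. destruct (Rrad r (q * n) Hr) as [y [Hy Ey]]. nia.
  rewrite <- Ey, gpow_mul, <- Vz; auto.
Qed.

End GT.


Theorem lemma2p6 (G : Group) (x : G) (R : G -> Prop) :
  periodic G ->
  chernikov G (commx G (whole G) x) ->
  chernikov_radicable_part G (commx G (whole G) x) R ->
  trivial_sub G (commx G R x) ->
  trivial_sub G R.
Proof.
  intros Hp _ HR Ht g. split.
  - intro Hg. exact (main_lemma G x R Hp HR Ht g Hg).
  - intros ->. destruct HR as [[H1 _] _]. exact H1.
Qed.
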